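(* Let $n,m\geq1$. Let $\bm{p}_{j}=(p_{1j},\ldots,p_{nj})^{T}\in\mathbb{R}^{n}$ for $j=1,\ldots,m$, let $w_{j}>0$ and $d_{j}>0$ and $h_{j}\in\mathbb{R}$ for $j=1,\ldots,m$, let $b_{ik}\in\mathbb{R}\cup\{-\infty\}$ for $i,k=1,\ldots,n$, and let $f_{i}\leq g_{i}$ be reals for $i=1,\ldots,n$. Consider the problem of minimizing over $\bm{x}=(x_{1},\ldots,x_{n})^{T}\in\mathbb{R}^{n}$ $$\max_{1\leq j\leq m}\Big(w_{j}\max_{1\leq i\leq n}|x_{i}-p_{ij}|+h_{j}\Big)$$ subject to $\max_{1\leq i\leq n}|x_{i}-p_{ij}|\leq d_{j}$ for $j=1,\ldots,m$, $b_{ik}+x_{k}\leq x_{i}$ for $i,k=1,\ldots,n$, and $f_{i}\leq x_{i}\leq g_{i}$ for $i=1,\ldots,n$. Suppose that 1. $\max_{1\leq i_{1},\ldots,i_{k-1}\leq n,\ i_{0}=i_{k}=i}(b_{i_{0}i_{1}}+\cdots+b_{i_{k-1}i_{k}})\leq0$ for all $i,k=1,\ldots,n$; 2. $b_{ik}^{\ast}+\max\{\max_{1\leq l\leq m}(p_{kl}-d_{l}),f_{k}\}\leq\min\{\min_{1\leq j\leq m}(p_{ij}+d_{j}),g_{i}\}$ for all $i,k=1,\ldots,n$. Then the minimum value of the problem is $$\theta=\max_{1\leq i,k\leq n}\max_{1\leq j,l\leq m}\max\Bigg\{\frac{w_{l}h_{j}}{w_{j}+w_{l}}+\frac{w_{j}h_{l}}{w_{j}+w_{l}}+\frac{w_{j}w_{l}}{w_{j}+w_{l}}(b_{ik}^{\ast}-p_{ij}+p_{kl}),\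 h_{j}+w_{j}\big(b_{ik}^{\ast}-p_{ij}+\max\{p_{kl}-d_{l},f_{k}\}\big),\ h_{l}+w_{l}\big(b_{ik}^{\ast}-\min\{p_{ij}+d_{j},g_{i}\}+p_{kl}\big)\Bigg\},$$ and all solution vectors $\bm{x}=(x_{i})$ are given by $x_{i}=\max_{1\leq k\leq n}(b_{ik}^{\ast}+u_{k})$, $i=1,\ldots,n$, where the parameter vector $\bm{u}=(u_{k})$ satisfies, for each $k=1,\ldots,n$, $$\max_{1\leq j\leq m}\max\left\{\frac{h_{j}-\theta}{w_{j}}+p_{kj},\ p_{kj}-d_{j},\ f_{k}\right\}\leq u_{k}\leq\min_{1\leq i\leq n}\min_{1\leq j\leq m}\left(\min\left\{\frac{\theta-h_{j}}{w_{j}}+p_{ij},\ p_{ij}+d_{j},\ g_{i}\right\}-b_{ik}^{\ast}\right).$$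
   Context: Conventions: $-\infty+a=-\infty$ for any $a$, and $a-(-\infty)=+\infty$ for real $a$. For $i,k=1,\ldots,n$ define $$\beta_{ik}=\max_{1\leq l\leq n-1}\ \max_{1\leq i_{1},\ldots,i_{l-1}\leq n,\ i_{0}=i,\ i_{l}=k}(b_{i_{0}i_{1}}+\cdots+b_{i_{l-1}i_{l}})$$ (maximum over all index sequences of length $l$ from $i$ to $k$; an empty maximum is $-\infty$), and set $b_{ik}^{\ast}=\beta_{ik}$ if $i\neq k$ and $b_{ii}^{\ast}=\max\{\beta_{ii},0\}$. *)

(* Defs.v *)
From HB Require Import structures.
From mathcomp Require Import all_boot all_order all_algebra.
From mathcomp Require Import constructive_ereal.
Set Implicit Arguments. Unset Strict Implicit. Unset Printing Implicit Defensive.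
Import Order.TTheory GRing.Theory Num.Theory.
Local Open Scope ring_scope.
Local Open Scope ereal_scope.

Section Defs.
Variables (R : realFieldType) (n : nat).
Variable b : 'I_n -> 'I_n -> \bar R.

Fixpoint pathw (i : 'I_n) (s : seq 'I_n) (k : 'I_n) : \bar R :=
  match s with
  | [::] => b i k
  | j :: s' => b i j + pathw j s' k
  end.

(* beta_{ik}: maximum over lengths l = 1..n-1 (t = l-1 intermediate indices)
   of the path weights from i to k; empty max = -oo *)
Definition beta (i k : 'I_n) : \bar R :=
  \big[maxe/-oo]_(t < n.-1) \big[maxe/-oo]_(s : t.-tuple 'I_n) pathw i s k.

Definition bstar (i k : 'I_n) : \bar R :=
  if i == k then maxe (beta i i) 0 else beta i k.

Definition chebd (x p : 'I_n -> R) : \bar R :=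
  \big[maxe/-oo]_(i < n) (`|x i - p i|%R)%:E.
End Defs.

(* Main.v *)
Require Import Defs.
From HB Require Import structures.
From mathcomp Require Import all_boot all_order all_algebra.
From mathcomp Require Import constructive_ereal.
From mathcomp Require Import ring lra zify.
Import Order.TTheory GRing.Theory Num.Theory.
Local Open Scope ring_scope.
Local Open Scope ereal_scope.
Set Implicit Arguments. Unset Strict Implicit. Unset Printing Implicit Defensive.
Section ERL.
Variable R : realFieldType.

Lemma maxQ (Q : \bar R -> Prop) x y : Q x -> Q y -> Q (maxe x y).
Proof. by rewrite maxEle; case: ifP. Qed.

Lemma bigmax_fin (I : finType) (i0 : I) (G : I -> R) :
  exists i1, \big[maxe/-oo]_(i : I) (G i)%:E = (G i1)%:E /\ forall i, (G i <= G i1)%R.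
Proof.
case: (@eq_bigmax _ _ I -oo i0 xpredT (fun i => (G i)%:E) isT (fun _ _ => leNye _)).
move=> i1 _ E; exists i1; split; first exact: E.
move=> i; rewrite -lee_fin -[X in _ <= X]E.
exact: (le_bigmax _ (fun i => (G i)%:E) i).
Qed.

Lemma bigmin_fin (I : finType) (i0 : I) (G : I -> R) :
  exists i1, \big[mine/+oo]_(i : I) (G i)%:E = (G i1)%:E /\ forall i, (G i1 <= G i)%R.
Proof.
case: (@eq_bigmin _ _ I +oo i0 xpredT (fun i => (G i)%:E) isT (fun _ _ => leey _)).
move=> i1 _ E; exists i1; split; first exact: E.
move=> i; rewrite -lee_fin -[X in X <= _]E.
exact: (bigmin_le _ i (fun i => (G i)%:E)).
Qed.

Lemma addleE (e : \bar R) a c : (e + a%:E <= c%:E) = (e <= (c - a)%:E).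
Proof.
case: e => [r||] //=; first by rewrite -EFinD !lee_fin lerBrDr.
by rewrite addNye !leNye.
Qed.

Lemma subleE (e : \bar R) a c : e != +oo -> (a%:E <= c%:E - e) = (e + a%:E <= c%:E).
Proof.
case: e => [r||] //= _; first by rewrite -EFinD !lee_fin lerBrDl.
by rewrite addey // addNye leey leNye.
Qed.

Lemma fin_between (a c : R) e : a%:E <= e -> e <= c%:E -> e = (fine e)%:E.
Proof. by case: e. Qed.
Lemma tE (a c be p q : R) :
  a%:E + c%:E * (be%:E - p%:E + q%:E) = (a + c * (be - p + q))%:E.
Proof. by []. Qed.
Lemma tN (a c p q : R) : (0 < c)%R ->
  a%:E + c%:E * (-oo - p%:E + q%:E) = -oo.
Proof. move=> c0. by rewrite !addNye mulrNy gtr0_sg // mul1e addeNy. Qed.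
Lemma tM (x y z: \bar R) : x = -oo -> y = -oo -> z = -oo -> maxe (maxe x y) z = -oo.
Proof. by move=> -> -> ->; rewrite !maxxx. Qed.
End ERL.
Section RealL.
Variable R : realFieldType.
Implicit Types (w h t a p : R).
Local Open Scope ring_scope.

Lemma absle w a p h t : 0 < w ->
  (w * `|a - p| + h <= t) = (((h - t) / w + p <= a) && (a <= (t - h) / w + p)).
Proof.
move=> w0; rewrite -lerBrDr mulrC -ler_pdivlMr // ler_norml.
by rewrite lerBlDr lerBrDr -mulNr opprB.
Qed.

Lemma absP (a : R) : a <= `|a| /\ - a <= `|a|.
Proof. by split; [exact: ler_norm | rewrite -normrN; exact: ler_norm]. Qed.

Definition T1 wj wl hj hl z : R :=
  (wl * hj / (wj + wl) + wj * hl / (wj + wl)) + (wj * wl / (wj + wl)) * z.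

Lemma T1E wj wl hj hl z : 0 < wj -> 0 < wl ->
  T1 wj wl hj hl z = (wl * hj + wj * hl + wj * wl * z) / (wj + wl).
Proof. move=> h1 h2; rewrite /T1; field; lra. Qed.

Lemma TRle wj wl hj hl pij pkl dj dl fk gi be xi xk phi :
  0 < wj -> 0 < wl -> be + xk <= xi ->
  wj * `|xi - pij| + hj <= phi -> wl * `|xk - pkl| + hl <= phi ->
  pkl - dl <= xk -> fk <= xk -> xi <= pij + dj -> xi <= gi ->
  [/\ T1 wj wl hj hl (be - pij + pkl) <= phi,
      hj + wj * (be - pij + Num.max (pkl - dl) fk) <= phi &
      hl + wl * (be - Num.min (pij + dj) gi + pkl) <= phi].
Proof.
move=> wj0 wl0 hx hj0 hl0 h1 h2 h3 h4.
have [a1 a2] := absP (xi - pij); have [c1 c2] := absP (xk - pkl).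
set A := `|xi - pij| in a1 a2 hj0 *; set C := `|xk - pkl| in c1 c2 hl0 *.
have hM : Num.max (pkl - dl) fk <= xk by rewrite ge_max h1 h2.
have hm : xi <= Num.min (pij + dj) gi by rewrite le_min h3 h4.
split.
- rewrite T1E // ler_pdivrMr; last lra.
  have e1 : wj * wl * (be - pij + pkl) <= wj * wl * (A + C).
    by apply: ler_wpM2l; [apply: mulr_ge0; lra | lra].
  have e2 : wl * (wj * A) <= wl * (phi - hj) by apply: ler_wpM2l; lra.
  have e3 : wj * (wl * C) <= wj * (phi - hl) by apply: ler_wpM2l; lra.
  nra.
- have e : wj * (be - pij + Num.max (pkl - dl) fk) <= wj * A.
    by apply: ler_wpM2l; lra.
  lra.
- have e : wl * (be - Num.min (pij + dj) gi + pkl) <= wl * C.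
    by apply: ler_wpM2l; lra.
  lra.
Qed.

Lemma nine wj wl hj hl pij pkl dj dl fk gi be t :
  0 < wj -> 0 < wl ->
  T1 wj wl hj hl (be - pij + pkl) <= t ->
  hj + wj * (be - pij + Num.max (pkl - dl) fk) <= t ->
  hl + wl * (be - Num.min (pij + dj) gi + pkl) <= t ->
  be + Num.max (pkl - dl) fk <= Num.min (pij + dj) gi ->
  be + Num.max (Num.max ((hl - t) / wl + pkl) (pkl - dl)) fk <=
  Num.min (Num.min ((t - hj) / wj + pij) (pij + dj)) gi.
Proof.
move=> wj0 wl0 t1 t2 t3 t4.
have m1 : pkl - dl <= Num.max (pkl - dl) fk by rewrite le_max lexx.
have m2 : fk <= Num.max (pkl - dl) fk by rewrite le_max lexx orbT.
have n1 : Num.min (pij + dj) gi <= pij + dj by rewrite ge_min lexx.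
have n2 : Num.min (pij + dj) gi <= gi by rewrite ge_min lexx orbT.
have s2 : be - pij + Num.max (pkl - dl) fk <= (t - hj) / wj.
  by rewrite ler_pdivlMr // mulrC lerBrDl.
have s3 : be - Num.min (pij + dj) gi + pkl <= (t - hl) / wl.
  by rewrite ler_pdivlMr // mulrC lerBrDl.
have s1 : be + ((hl - t) / wl + pkl) <= (t - hj) / wj + pij.
  rewrite -subr_ge0.
  have -> : (t - hj) / wj + pij - (be + ((hl - t) / wl + pkl)) =
      (t * (wj + wl) - (wl * hj + wj * hl + wj * wl * (be - pij + pkl))) / (wj * wl).
    by field; apply/andP; split; lra.
  apply: divr_ge0; last by apply: mulr_ge0; lra.
  rewrite subr_ge0 -ler_pdivrMr; last lra.
  by rewrite -T1E.
have s3' : (hl - t) / wl = - ((t - hl) / wl) by rewrite -mulNr opprB.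
rewrite !le_min -!lerBrDl !ge_max.
repeat (apply/andP; split); lra.
Qed.
End RealL.
Section Paths.
Variables (R : realFieldType) (n : nat) (b : 'I_n -> 'I_n -> \bar R).
Hypothesis H1 : forall (i : 'I_n) (t : 'I_n),
      \big[maxe/-oo]_(s : t.-tuple 'I_n) pathw b i s i <= 0.

Fixpoint W (v : seq 'I_n) : \bar R :=
  match v with
  | x :: ((y :: _) as r) => b x y + W r
  | _ => 0
  end.

Lemma Wcat l1 c l2 : W (l1 ++ c :: l2) = W (rcons l1 c) + W (c :: l2).
Proof.
elim: l1 => [|x [|y l] IH] /=; first by rewrite add0e.
  by rewrite adde0.
by move: IH => /= ->; rewrite addeA.
Qed.

Lemma pathwW i s k : pathw b i s k = W (i :: rcons s k).
Proof.
elim: s i => [|j s IH] i /=; first by rewrite adde0.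
by rewrite IH.
Qed.

Lemma notuniq_split (T : eqType) (l : seq T) : ~~ uniq l ->
  exists l1 c l2 l3, l = l1 ++ c :: l2 ++ c :: l3.
Proof.
elim: l => [|x s IH] //=; rewrite negb_and negbK => /orP[xs|/IH].
  case/splitPr: xs => p1 p2; by exists [::], x, p1, p2.
by case=> l1 [c [l2 [l3 ->]]]; exists (x :: l1), c, l2, l3.
Qed.

Lemma pigeon (v : seq 'I_n) : (n < size v)%N -> ~~ uniq v.
Proof.
move=> hs; apply/negP => /card_uniqP U.
have := max_card (mem v); rewrite card_ord U => h.
by move: (leq_ltn_trans h hs); rewrite ltnn.
Qed.

Lemma cycle_le0 N r a : (size r <= N)%N -> last a r = a -> W (a :: r) <= 0.
Proof.
elim: N r a => [|N IH] r a.
  by case: r.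
move=> hs; case: (leqP (size r) n) => hrn.
  case/lastP: r hs hrn => [|s c] hs hrn; first by [].
  rewrite last_rcons => ->.
  rewrite size_rcons in hrn.
  have ht : (size s < n)%N by [].
  apply: le_trans (H1 a (Ordinal ht)).
  rewrite -pathwW.
  exact: (le_bigmax _ (fun s0 : (size s).-tuple 'I_n => pathw b a s0 a) (in_tuple s)).
move: (pigeon hrn) => /notuniq_split [l1 [c [l2 [l3 E]]]].
move=> hl.
have : W (a :: l1 ++ c :: l3) <= 0.
  apply: IH; first by (move: hs; rewrite E; do 3 rewrite ?size_cat ?size_rcons /=; lia).
  by move: hl; rewrite E !last_cat /= last_cat.
have : W (c :: rcons l2 c) <= 0.
  apply: IH; last by rewrite last_rcons.
  by (move: hs; rewrite E; do 3 rewrite ?size_cat ?size_rcons /=; lia).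
move=> h1 h2.
rewrite E (Wcat (a :: l1)) (Wcat (c :: l2)).
rewrite (Wcat (a :: l1)) in h2.
rewrite addeCA -[0]add0e; exact: leeD.
Qed.

Lemma beta_le_bstar i k : beta b i k <= bstar b i k.
Proof. by rewrite /bstar; case: eqP => [->|_] //; rewrite le_max lexx. Qed.

Lemma bstar_ge0 i : 0 <= bstar b i i.
Proof. by rewrite /bstar eqxx le_max lexx orbT. Qed.

Lemma path_le_bstar N r i : (size r <= N)%N -> W (i :: r) <= bstar b i (last i r).
Proof.
elim: N r i => [|N IH] r i.
  by case: r => //= _; exact: bstar_ge0.
move=> hs; case: (ltnP (size r) n) => hrn.
  case/lastP: r hs hrn => [|s k] hs hrn; first exact: bstar_ge0.
  rewrite last_rcons size_rcons in hrn *.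
  apply: le_trans (beta_le_bstar i k).
  have ht : (size s < n.-1)%N by lia.
  rewrite -pathwW.
  apply: le_trans (le_bigmax _ _ (Ordinal ht)).
  exact: (le_bigmax _ (fun s0 : (size s).-tuple 'I_n => pathw b i s0 k) (in_tuple s)).
have : (n < size (i :: r))%N by [].
move/pigeon/notuniq_split => [l1 [c [l2 [l3 E]]]].
have key : W (i :: r) <= W (l1 ++ c :: l3).
  rewrite E Wcat.
  rewrite (_ : c :: l2 ++ c :: l3 = (c :: l2) ++ c :: l3) // Wcat Wcat.
  rewrite addeCA; apply: (le_trans (leeD2r _ (cycle_le0 (leqnn _) _))).
    by rewrite last_rcons.
  by rewrite add0e.
have hl : last i r = last c l3.
  by rewrite (_ : last i r = last i (i :: r)) // E last_cat /= last_cat.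
case: l1 E key => [|x l1] [ec Er] key.
  subst c; apply: le_trans key _; rewrite hl; apply: (IH l3 i).
  by (move: hs; rewrite Er; do 3 rewrite ?size_cat ?size_rcons /=; lia).
subst x; apply: le_trans key _.
rewrite hl (_ : last c l3 = last i (l1 ++ c :: l3)); last by rewrite last_cat.
apply: (IH (l1 ++ c :: l3) i).
by (move: hs; rewrite Er; do 3 rewrite ?size_cat ?size_rcons /=; lia).
Qed.

Lemma walk_bound (x : 'I_n -> R) : (forall i k, b i k + (x k)%:E <= (x i)%:E) ->
  forall r i, W (i :: r) <= (x i - x (last i r))%:E.
Proof.
move=> hx; elim=> [|j r IH] i /=; first by rewrite subrr.
rewrite (_ : (x i - x (last j r)) = (x i - x j) + (x j - x (last j r)))%R; last by ring.
by rewrite EFinD; apply: leeD; [rewrite -addleE | exact: IH].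
Qed.

Lemma P2 (x : 'I_n -> R) : (forall i k, b i k + (x k)%:E <= (x i)%:E) ->
  forall i k, bstar b i k + (x k)%:E <= (x i)%:E.
Proof.
move=> hx i k; rewrite addleE.
have hb : beta b i k <= (x i - x k)%:E.
  apply: bigmax_le => [|t _]; first exact: leNye.
  apply: bigmax_le => [|s _]; first exact: leNye.
  by rewrite pathwW (le_trans (walk_bound hx _ _)) // last_rcons.
rewrite /bstar; case: eqP => [e|_]; last exact: hb.
by rewrite -e in hb *; rewrite ge_max hb subrr lexx.
Qed.

Lemma P3 i k l : b i k + bstar b k l <= bstar b i l.
Proof.
have hbeta : forall l, b i k + beta b k l <= bstar b i l.
  move=> l'; apply: (big_ind (fun e => b i k + e <= bstar b i l')).
  - by rewrite addeNy leNye.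
  - by move=> x y hx hy; rewrite maxEle; case: ifP.
  move=> t _; apply: (big_ind (fun e => b i k + e <= bstar b i l')).
  - by rewrite addeNy leNye.
  - by move=> x y hx hy; rewrite maxEle; case: ifP.
  move=> s _; rewrite pathwW.
  have := path_le_bstar (r := k :: rcons s l') i (leqnn _).
  by rewrite /= last_rcons.
have -> : bstar b k l = if k == l then maxe (beta b k k) 0 else beta b k l by [].
case: eqP => [<-|_]; last exact: hbeta.
rewrite adde_maxr ge_max hbeta /=.
have := path_le_bstar (r := [:: k]) i (leqnn _).
by rewrite /= adde0.
Qed.
End Paths.
Unset Implicit Arguments.

Theorem corollary1 (R : realFieldType) (n m : nat)
  (hn : (0 < n)%N) (hm : (0 < m)%N)
  (p : 'I_n -> 'I_m -> R) (w d h : 'I_m -> R)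
  (hw : forall j, (0 < w j)%R) (hd : forall j, (0 < d j)%R)
  (b : 'I_n -> 'I_n -> \bar R) (hb : forall i k, b i k != +oo)
  (f g : 'I_n -> R) (hfg : forall i, (f i <= g i)%R)
  (H1 : forall (i : 'I_n) (t : 'I_n),
      \big[maxe/-oo]_(s : t.-tuple 'I_n) pathw b i s i <= 0)
  (H2 : forall i k : 'I_n,
      bstar b i k + maxe (\big[maxe/-oo]_(l < m) (p k l - d l)%:E) (f k)%:E
      <= mine (\big[mine/+oo]_(j < m) (p i j + d j)%:E) (g i)%:E) :
  let F := fun x : 'I_n -> R =>
    \big[maxe/-oo]_(j < m) ((w j)%:E * chebd x (fun i => p i j) + (h j)%:E) in
  let feasible := fun x : 'I_n -> R =>
    [/\ forall j, chebd x (fun i => p i j) <= (d j)%:E,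
        forall i k, b i k + (x k)%:E <= (x i)%:E
      & forall i, (f i <= x i <= g i)%R] in
  let theta :=
    \big[maxe/-oo]_(i < n) \big[maxe/-oo]_(k < n)
    \big[maxe/-oo]_(j < m) \big[maxe/-oo]_(l < m)
      maxe (maxe
        ((w l * h j / (w j + w l) + w j * h l / (w j + w l))%R%:E
           + (w j * w l / (w j + w l))%R%:E
             * (bstar b i k - (p i j)%:E + (p k l)%:E))
        ((h j)%:E + (w j)%:E
             * (bstar b i k - (p i j)%:E + (Num.max (p k l - d l) (f k))%:E)))
        ((h l)%:E + (w l)%:E
             * (bstar b i k - (Num.min (p i j + d j) (g i))%:E + (p k l)%:E)) in
  (exists x, feasible x /\ F x = theta) /\
  (forall x, feasible x -> theta <= F x) /\
  (forall x : 'I_n -> R, (feasible x /\ F x = theta) <->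
     exists u : 'I_n -> R,
       (forall k,
          \big[maxe/-oo]_(j < m)
             maxe (maxe (((h j)%:E - theta) * ((w j)^-1)%:E + (p k j)%:E)
                        (p k j - d j)%:E) (f k)%:E
          <= (u k)%:E
          <= \big[mine/+oo]_(i < n) \big[mine/+oo]_(j < m)
               (mine (mine ((theta - (h j)%:E) * ((w j)^-1)%:E + (p i j)%:E)
                           (p i j + d j)%:E) (g i)%:E
                - bstar b i k)) /\
       (forall i, (x i)%:E = \big[maxe/-oo]_(k < n) (bstar b i k + (u k)%:E))).
Proof.
move=> F feasible theta.
pose i0 : 'I_n := Ordinal hn; pose j0 : 'I_m := Ordinal hm.
have bs0 := bstar_ge0 b.
have P3' := P3 H1.
have bsnoo : forall i k, bstar b i k != +oo.
  move=> i k; apply/eqP => E; move: (H2 i k); rewrite E.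
  have [l1 [-> _]] := bigmax_fin j0 (fun l => (p k l - d l)%R).
  have [j1 [-> _]] := bigmin_fin j0 (fun j => (p i j + d j)%R).
  by rewrite -EFin_max -EFin_min addye.
have pos : forall j l, (0 < w j * w l / (w j + w l))%R.
  by move=> j l; apply: divr_gt0; [apply: mulr_gt0 | apply: addr_gt0].
pose TR (be : R) (i k : 'I_n) (j l : 'I_m) : R :=
  (Num.max (Num.max (T1 (w j) (w l) (h j) (h l) (be - p i j + p k l))
    (h j + w j * (be - p i j + Num.max (p k l - d l) (f k))))
    (h l + w l * (be - Num.min (p i j + d j) (g i) + p k l)))%R.
have termE : forall i k j l be,
  maxe (maxe
        ((w l * h j / (w j + w l) + w j * h l / (w j + w l))%R%:E
           + (w j * w l / (w j + w l))%R%:E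
             * (be%:E - (p i j)%:E + (p k l)%:E))
        ((h j)%:E + (w j)%:E
             * (be%:E - (p i j)%:E + (Num.max (p k l - d l) (f k))%:E)))
        ((h l)%:E + (w l)%:E
             * (be%:E - (Num.min (p i j + d j) (g i))%:E + (p k l)%:E))
  = (TR be i k j l)%:E.
  move=> i k j l be.
  by rewrite /TR /T1 !tE -!EFin_max.
have termNy : forall i k j l,
  maxe (maxe
        ((w l * h j / (w j + w l) + w j * h l / (w j + w l))%R%:E
           + (w j * w l / (w j + w l))%R%:E
             * (-oo - (p i j)%:E + (p k l)%:E))
        ((h j)%:E + (w j)%:E
             * (-oo - (p i j)%:E + (Num.max (p k l - d l) (f k))%:E)))
        ((h l)%:E + (w l)%:E
             * (-oo - (Num.min (p i j + d j) (g i))%:E + (p k l)%:E))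
  = -oo.
  move=> i k j l.
  by apply: tM; apply: tN.
pose TT i k j l := if bstar b i k is be%:E then (TR be i k j l)%:E else -oo.
have thetaE : theta = \big[maxe/-oo]_(i < n) \big[maxe/-oo]_(k < n)
    \big[maxe/-oo]_(j < m) \big[maxe/-oo]_(l < m) TT i k j l.
  rewrite /theta; apply: eq_bigr => i _; apply: eq_bigr => k _.
  apply: eq_bigr => j _; apply: eq_bigr => l _.
  rewrite /TT; move: (bsnoo i k); case: (bstar b i k) => [be||] hbo.
  - exact: termE.
  - by rewrite eqxx in hbo.
  - exact: termNy.
clearbody theta.
have thnoo : theta != +oo.
  rewrite thetaE.
  apply: (big_ind (fun e => e != +oo)) => //; first by move=> x y hx hy; rewrite maxEle; case: ifP.
  move=> i _; apply: (big_ind (fun e => e != +oo)) => //; first by move=> x y hx hy; rewrite maxEle; case: ifP.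
  move=> k _; apply: (big_ind (fun e => e != +oo)) => //; first by move=> x y hx hy; rewrite maxEle; case: ifP.
  move=> j _; apply: (big_ind (fun e => e != +oo)) => //; first by move=> x y hx hy; rewrite maxEle; case: ifP.
  by move=> l _; rewrite /TT; case: (bstar b i k).
have thge : forall i k j l, TT i k j l <= theta.
  move=> i k j l; rewrite thetaE.
  apply: le_trans (le_bigmax _ _ i); apply: le_trans (le_bigmax _ _ k).
  apply: le_trans (le_bigmax _ _ j); exact: (le_bigmax _ (fun l => TT i k j l) l).
have [t tE] : exists t, theta = t%:E.
  move: (thge i0 i0 j0 j0) thnoo; rewrite /TT.
  move: (bs0 i0) (bsnoo i0 i0); case: (bstar b i0 i0) => [be||] //.
  move=> _ _ hge hno; exists (fine theta); rewrite fineK // fin_numE hno andbT.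
  by apply/negP => /eqP E; move: hge; rewrite E.
rewrite tE in thetaE thge; rewrite tE; clear tE thnoo.
have thT : forall i k j l be, bstar b i k = be%:E -> (TR be i k j l <= t)%R.
  by move=> i k j l be E; rewrite -lee_fin; have := thge i k j l; rewrite /TT E.
have thL : forall phi, (forall i k j l be, bstar b i k = be%:E -> (TR be i k j l <= phi)%R) ->
    (t <= phi)%R.
  move=> phi H; rewrite -lee_fin thetaE.
  apply: bigmax_le => [|i1 _]; first exact: leNye.
  apply: bigmax_le => [|k1 _]; first exact: leNye.
  apply: bigmax_le => [|j1 _]; first exact: leNye.
  apply: bigmax_le => [|l1 _]; first exact: leNye.
  rewrite /TT; case E: (bstar b i1 k1) => [be||];
    [by rewrite lee_fin; exact: H E | exact: leNye | exact: leNye].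
have chebE : forall (x : 'I_n -> R) j, exists i1,
    (chebd x (fun i => p i j) = (`|x i1 - p i1 j|)%:E) /\
    (forall i, (`|x i - p i j| <= `|x i1 - p i1 j|)%R).
  move=> x j; exact: (bigmax_fin i0 (fun i => `|x i - p i j|%R)).
have cheb_le : forall (x : 'I_n -> R) j,
    chebd x (fun i => p i j) <= (d j)%:E <-> forall i, (`|x i - p i j| <= d j)%R.
  move=> x j; have [i1 [-> hi1]] := chebE x j; rewrite lee_fin; split.
    by move=> H i; apply: le_trans (hi1 i) H.
  by move=> H; apply: H.
have Fge : forall (x : 'I_n -> R) j i, (w j * `|x i - p i j| + h j)%:E <= F x.
  move=> x j i; rewrite /F; apply: le_trans (le_bigmax _ _ j).
  have [i1 [-> hi1]] := chebE x j.
  rewrite -EFinM -EFinD lee_fin lerD2r ler_wpM2l //; first exact: ltW.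
have Fle : forall (x : 'I_n -> R) phi,
    (forall j i, (w j * `|x i - p i j| + h j <= phi)%R) -> F x <= phi%:E.
  move=> x phi H; apply: bigmax_le => [|j _]; first exact: leNye.
  by have [i1 [-> _]] := chebE x j; rewrite -EFinM -EFinD lee_fin.
have part2 : forall x, feasible x -> t%:E <= F x.
  move=> x [hd' hb' hfg'].
  case E: (F x) => [phi||]; last 2 first.
  - exact: leey.
  - by have := Fge x j0 i0; rewrite E.
  rewrite lee_fin; apply: thL => i k j l be hbe.
  have hx := P2 hb' i k; rewrite hbe -EFinD lee_fin in hx.
  have hj := Fge x j i; have hl := Fge x l k; rewrite E lee_fin in hj hl.
  have /cheb_le hdl := hd' l; have /cheb_le hdj := hd' j.
  move: (hdl k) (hdj i); rewrite !ler_norml => /andP[a1 a2] /andP[a3 a4].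
  move: (hfg' k) (hfg' i) => /andP[f1 f2] /andP[f3 f4].
  have [] := TRle (hw j) (hw l) hx hj hl (pkl := p k l) (dl := d l) (fk := f k) (dj := d j) (gi := g i).
  - lra.
  - lra.
  - lra.
  - lra.
  by move=> r1 r2 r3; rewrite /TR !ge_max r1 r2 r3.
pose Up (i : 'I_n) (j : 'I_m) : R :=
  Num.min (Num.min ((t - h j) / w j + p i j) (p i j + d j))%R (g i).
have back : forall (x u : 'I_n -> R),
    (forall k j, [/\ ((h j - t) / w j + p k j <= u k)%R,
                     (p k j - d j <= u k)%R & (f k <= u k)%R]) ->
    (forall i k j, bstar b i k + (u k)%:E <= (Up i j)%:E) ->
    (forall i, (x i)%:E = \big[maxe/-oo]_(k < n) (bstar b i k + (u k)%:E)) ->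
    feasible x /\ F x = t%:E.
  move=> x u hL hU hx.
  have xlo : forall i, (u i <= x i)%R.
    move=> i; rewrite -lee_fin hx; apply: le_trans (le_bigmax _ _ i).
    rewrite -{1}[(u i)%:E]add0e; apply: leeD2r; exact: bs0.
  have xup : forall i j, (x i <= Up i j)%R.
    move=> i j; rewrite -lee_fin hx; apply: bigmax_le => [|k _]; first exact: leNye.
    exact: hU.
  have xup3 : forall i j, [/\ (x i <= (t - h j) / w j + p i j)%R,
      (x i <= p i j + d j)%R & (x i <= g i)%R].
    move=> i j; have := xup i j; rewrite /Up !le_min => /andP[/andP[-> ->] ->].
    by [].
  have hfe : feasible x.
    split.
    - move=> j; apply/cheb_le => i; rewrite ler_norml.
      have [_ ? _] := hL i j; have [_ ? _] := xup3 i j; have := xlo i.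
      move=> ?; apply/andP; split; lra.
    - move=> i k; rewrite (hx i) (hx k).
      apply: (big_ind (fun e => b i k + e <= \big[maxe/-oo]_(k0 < n) (bstar b i k0 + (u k0)%:E))).
      + by rewrite addeNy leNye.
      + by move=> y z hy hz; rewrite maxEle; case: ifP.
      move=> l _; rewrite addeA; apply: le_trans (le_bigmax _ _ l).
      by apply: leeD2r; exact: P3'.
    - move=> i; have [_ _ ?] := hL i j0; have [_ _ ?] := xup3 i j0; have := xlo i.
      move=> ?; apply/andP; split; lra.
  split => //; apply: le_anti; rewrite part2 // andbT.
  apply: Fle => j i; rewrite absle //.
  have [? _ _] := hL i j; have [? _ _] := xup3 i j; have := xlo i.
  move=> ?; apply/andP; split; lra.
split; [|split].
- pose u k := \big[Num.max/f k]_(j < m)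
      (Num.max (Num.max ((h j - t) / w j + p k j) (p k j - d j)) (f k))%R.
  have hL : forall k j, [/\ ((h j - t) / w j + p k j <= u k)%R,
                     (p k j - d j <= u k)%R & (f k <= u k)%R].
    move=> k j.
    have := le_bigmax (f k) (fun j =>
      (Num.max (Num.max ((h j - t) / w j + p k j) (p k j - d j)) (f k))%R) j.
    by rewrite !ge_max => /andP[/andP[a1 a2] a3]; split.
  have hU : forall i k j, bstar b i k + (u k)%:E <= (Up i j)%:E.
    move=> i k j; have h2 := H2 i k; move: h2 (bsnoo i k) (thT i k j).
    case E: (bstar b i k) => [be||] h2 hbo thT'; last first.
    + by rewrite addNye leNye.
    + by rewrite eqxx in hbo.
    have h2r : forall l,
        (be + Num.max (p k l - d l) (f k) <= Num.min (p i j + d j) (g i))%R.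
      move=> l; rewrite -lee_fin; apply: le_trans (le_trans _ h2) _.
      * rewrite EFinD EFin_max; apply: leeD2l; rewrite ge_max.
        apply/andP; split; rewrite le_max; apply/orP.
        - by left; exact: (le_bigmax _ (fun l0 => (p k l0 - d l0)%:E) l).
        - by right; exact: lexx.
      * rewrite EFin_min le_min.
        apply/andP; split; rewrite ge_min; apply/orP.
        - by left; exact: (bigmin_le _ j (fun j0 => (p i j0 + d j0)%:E)).
        - by right; exact: lexx.
    rewrite -EFinD lee_fin.
    have N9 : forall l, (be + Num.max (Num.max ((h l - t) / w l + p k l)
        (p k l - d l)) (f k) <= Up i j)%R.
      move=> l; have := thT' l be erefl; rewrite /TR !ge_max => /andP[/andP[r1 r2] r3].
      exact: nine (hw j) (hw l) r1 r2 r3 (h2r l).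
    rewrite addrC -lerBrDr.
    apply: bigmax_le => [|l _].
      have := N9 j0.
      have : (f k <= Num.max (Num.max ((h j0 - t) / w j0 + p k j0) (p k j0 - d j0)) (f k))%R.
        by rewrite le_max lexx orbT.
      move=> ? ?; lra.
    by have := N9 l; move=> ?; lra.
  pose xe i := \big[maxe/-oo]_(k < n) (bstar b i k + (u k)%:E).
  have xfin : forall i, xe i = (fine (xe i))%:E.
    move=> i; apply: (@fin_between _ (u i) (Up i j0)).
      apply: le_trans (le_bigmax _ _ i); rewrite -{1}[(u i)%:E]add0e; apply: leeD2r; exact: bs0.
    apply: bigmax_le => [|k _]; [exact: leNye | exact: hU].
  exists (fun i => fine (xe i)).
  by apply: (back _ u hL hU) => i; rewrite -xfin.
- exact: part2.
move=> x; split.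
- move=> [hfe hF]; case: (hfe) => hd' hb' hfg'.
  exists x; split.
  + move=> k; apply/andP; split.
    * apply: bigmax_le => [|j _]; first exact: leNye.
      rewrite -EFinB -EFinM -EFinD !ge_max !lee_fin.
      have := Fge x j k; rewrite hF lee_fin absle // => /andP[a1 _].
      have := (cheb_le x j).1 (hd' j) k; rewrite ler_norml => /andP[c1 _].
      move: (hfg' k) => /andP[f1 _].
      apply/andP; split; [apply/andP; split|]; lra.
    * apply: le_bigmin => [|i _]; first exact: leey.
      apply: le_bigmin => [|j _]; first exact: leey.
      rewrite -EFinB -EFinM -EFinD -!EFin_min subleE //.
      apply: le_trans (P2 hb' i k) _; rewrite lee_fin !le_min.
      have := Fge x j i; rewrite hF lee_fin absle // => /andP[_ a2].
      have := (cheb_le x j).1 (hd' j) i; rewrite ler_norml => /andP[_ c2].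
      move: (hfg' i) => /andP[_ f2].
      apply/andP; split; [apply/andP; split|]; lra.
  + move=> i; apply/eqP; rewrite eq_le; apply/andP; split.
    * apply: le_trans (le_bigmax _ _ i); rewrite -{1}[(x i)%:E]add0e.
      apply: leeD2r; exact: bs0.
    * apply: bigmax_le => [|k _]; [exact: leNye | exact: P2 hb' i k].
- move=> [u [hu hx]]; apply: (back x u) => //.
  + move=> k j; move/andP: (hu k) => [lo _].
    have := le_trans (le_bigmax _ _ j) lo.
    rewrite -EFinB -EFinM -EFinD !ge_max !lee_fin => /andP[/andP[a1 a2] a3].
    by split.
  + move=> i k j; move/andP: (hu k) => [_ up].
    have := le_trans (le_trans up (bigmin_le _ i _)) (bigmin_le _ j _).
    by rewrite -EFinB -EFinM -EFinD -!EFin_min subleE.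
Qed.
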